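(* Let $G$, $H$ be graphs with $n=|V(G)|$, $n'=|V(H)|$, $m=|E(G)|$, $m'=|E(H)|$, and let $k_V$, $k_E$ be vertex and edge kernels whose single evaluation takes time $\mathsf{T}_V$ and $\mathsf{T}_E$, respectively. Consider the following algorithm: for all $v\in V(G)$, $v'\in V(H)$, compute $w\gets k_V(v,v')$ and, if $w>0$, create a vertex $(v,v')$ of weight $w$; then, fixing an arbitrary total order $\prec$ on the created vertices, for every created vertex $(u,s)$ and all $v\in N(u)$, $t\in N(s)$ such that $(v,t)$ is a created vertex and $(u,s)\prec(v,t)$, compute $w\gets k_E(uv,st)$ and, if $w>0$, create the edge $(u,s)(v,t)$ of weight $w$. This algorithm computes the weighted direct product graph $G\times_w H$ in time $O(nn'\mathsf{T}_V+mm'\mathsf{T}_E)$.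
   Context: Graphs are finite and undirected; $N(v)$ denotes the neighborhood of $v$. The weighted direct product graph $G\times_w H=(\mathcal V,\mathcal E,w)$ is defined by $\mathcal V=\{(v,v')\in V(G)\times V(H): k_V(v,v')>0\}$, $\mathcal E=\{(u,u')(v,v'): (u,u'),(v,v')\in\mathcal V,\ uv\in E(G),\ u'v'\in E(H),\ k_E(uv,u'v')>0\}$, with weights $w((u,u'))=k_V(u,u')$ and $w((u,u')(v,v'))=k_E(uv,u'v')$. *)

(* Defs.v *)
From HB Require Import structures.
From mathcomp Require Import all_boot all_order all_algebra.
Set Implicit Arguments. Unset Strict Implicit. Unset Printing Implicit Defensive.
Import Order.TTheory GRing.Theory Num.Theory.
Local Open Scope ring_scope.

(* A finite simple graph on a finType T is given by a symmetric irreflexive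
   relation e : rel T.  Its edge set is the set of 2-sets {u,v} with e u v. *)
Definition edge_set (T : finType) (e : rel T) : {set {set T}} :=
  [set A : {set T} | [exists u, exists v, e u v && (A == [set u; v])]].

Section Product.
Variables (R : numDomainType) (V1 V2 : finType) (e1 : rel V1) (e2 : rel V2).
(* vertex kernel k_V and edge kernel k_E; k_E u v s t stands for k_E(uv, st). *)
Variables (kV : V1 -> V2 -> R) (kE : V1 -> V1 -> V2 -> V2 -> R).

Definition wdp_vertex (p : V1 * V2) : bool := 0 < kV p.1 p.2.
Definition wdp_edge (x y : V1 * V2) : bool :=
  [&& wdp_vertex x, wdp_vertex y, e1 x.1 y.1, e2 x.2 y.2 & 0 < kE x.1 y.1 x.2 y.2].
Definition wdp_vweight (p : V1 * V2) : R := kV p.1 p.2.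
Definition wdp_eweight (x y : V1 * V2) : R := kE x.1 y.1 x.2 y.2.

(* ---- The algorithm, instrumented with a cost counter (nat). ----
   Cost model: one evaluation of k_V costs TV, one evaluation of k_E costs TE,
   every other elementary step (loop iteration, comparison, O(1) lookup in the
   n x n' table of created vertices, creation of a vertex/edge) costs 1. *)
Variables (TV TE : nat) (prec : rel (V1 * V2)).

Definition all_pairs : seq (V1 * V2) := [seq (v, v') | v <- enum V1, v' <- enum V2].

(* Phase 1: create the weighted vertices. Cost per pair: TV for k_V, plus 2
   (table initialisation/test and creation). *)
Definition phase1 : seq ((V1 * V2) * R) * nat :=
  foldr (fun p acc =>
           let w := kV p.1 p.2 in
           let c := (acc.2 + TV + 2)%N in
           if 0 < w then ((p, w) :: acc.1, c) else (acc.1, c))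
        ([::], 0%N) all_pairs.

Definition nbr_pairs (x : V1 * V2) : seq (V1 * V2) :=
  [seq (v, t) | v <- enum (e1 x.1), t <- enum (e2 x.2)].

Definition phase2 (vs : seq ((V1 * V2) * R)) :
    seq ((V1 * V2) * (V1 * V2) * R) * nat :=
  let created y := y \in map fst vs in
  foldr (fun pw acc =>
     let x := pw.1 in
     foldr (fun y acc2 =>
              let c := (acc2.2 + 1)%N in
              if created y && prec x y then
                let w := kE x.1 y.1 x.2 y.2 in
                let c' := (c + TE + 1)%N in
                if 0 < w then ((x, y, w) :: acc2.1, c') else (acc2.1, c')
              else (acc2.1, c))
           (acc.1, (acc.2 + 1)%N) (nbr_pairs x))
    ([::], 0%N) vs.

Definition wdp_algorithm :
    seq ((V1 * V2) * R) * seq ((V1 * V2) * (V1 * V2) * R) * nat :=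
  let (vs, c1) := phase1 in
  let (es, c2) := phase2 vs in
  (vs, es, (c1 + c2)%N).

(* Correctness of an output (vs, es) w.r.t. G x_w H:
   vs lists every vertex of G x_w H exactly once with its weight, and es lists
   every (unordered) edge of G x_w H exactly once (in one orientation) with
   its weight. *)
Definition computes_wdp (vs : seq ((V1 * V2) * R))
    (es : seq ((V1 * V2) * (V1 * V2) * R)) : Prop :=
  [/\ uniq (map fst vs),
      forall p w, ((p, w) \in vs) = wdp_vertex p && (w == wdp_vweight p),
      uniq [seq [set x.1.1; x.1.2] | x <- es],
      forall x y w, (x, y, w) \in es -> w = wdp_eweight x y &
      forall x y, wdp_edge x y <->
        exists w, ((x, y, w) \in es) \/ ((y, x, w) \in es)].
End Product.

(* Main.v *)
Require Import Defs.
From HB Require Import structures.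
From mathcomp Require Import all_boot all_order all_algebra.
From mathcomp Require Import zify.
Import Order.TTheory GRing.Theory Num.Theory.
Local Open Scope ring_scope.
Set Implicit Arguments. Unset Strict Implicit.

Section Aux.
Variables (R : numDomainType) (V1 V2 : finType) (e1 : rel V1) (e2 : rel V2).
Variables (kV : V1 -> V2 -> R) (kE : V1 -> V1 -> V2 -> V2 -> R).
Variables (TV TE : nat) (prec : rel (V1 * V2)).

Definition VS := [seq (p, kV p.1 p.2) | p <- all_pairs V1 V2 & 0 < kV p.1 p.2].

Lemma phase1E : phase1 kV TV = (VS, (size (all_pairs V1 V2) * (TV + 2))%N).
Proof.
rewrite /phase1 /VS; elim: (all_pairs V1 V2) => //= p s IH.
rewrite IH /=; case: ifP => _ /=; congr pair; rewrite mulSn; lia.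
Qed.

Definition inner (cr : pred (V1 * V2)) (x : V1 * V2) :=
  fun (y : V1 * V2) (acc2 : seq ((V1 * V2) * (V1 * V2) * R) * nat) =>
              let c := (acc2.2 + 1)%N in
              if cr y && prec x y then
                let w := kE x.1 y.1 x.2 y.2 in
                let c' := (c + TE + 1)%N in
                if 0 < w then ((x, y, w) :: acc2.1, c') else (acc2.1, c')
              else (acc2.1, c).

Definition outer (cr : pred (V1 * V2)) :=
  fun (pw : (V1 * V2) * R) (acc : seq ((V1 * V2) * (V1 * V2) * R) * nat) =>
     let x := pw.1 in
     foldr (inner cr x) (acc.1, (acc.2 + 1)%N) (nbr_pairs e1 e2 x).

Lemma phase2E vs : phase2 e1 e2 kE TE prec vs =
   foldr (outer (fun y => y \in map fst vs)) ([::], 0%N) vs.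
Proof. by []. Qed.

Definition F (cr : pred (V1 * V2)) (x : V1 * V2) :=
  [seq (x, y, kE x.1 y.1 x.2 y.2) | y <- [seq y <- nbr_pairs e1 e2 x |
       (cr y && prec x y) && (0 < kE x.1 y.1 x.2 y.2)]].

Lemma inner_l cr x ys a c : (foldr (inner cr x) (a, c) ys).1 =
  [seq (x, y, kE x.1 y.1 x.2 y.2) | y <- [seq y <- ys |
       (cr y && prec x y) && (0 < kE x.1 y.1 x.2 y.2)]] ++ a.
Proof.
elim: ys => //= y ys IH; rewrite /inner -/(inner cr x).
case: (cr y && prec x y) => /=; last by [].
by case: (0 < kE _ _ _ _) => /=; rewrite IH.
Qed.

Lemma inner_c cr x ys a c : ((foldr (inner cr x) (a, c) ys).2 <= c + size ys * (TE + 2))%N.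
Proof.
elim: ys => //= [|y ys IH]; first by rewrite addn0.
rewrite /inner -/(inner cr x).
case: (cr y && prec x y) => /=; last by lia.
by case: (0 < kE _ _ _ _) => /=; lia.
Qed.

Lemma outer_l cr l : (foldr (outer cr) ([::], 0%N) l).1 = flatten [seq F cr pw.1 | pw <- l].
Proof.
elim: l => //= pw l IH; rewrite /outer -/(outer cr) inner_l IH //.
Qed.

Lemma outer_c cr l : ((foldr (outer cr) ([::], 0%N) l).2 <=
   sumn [seq 1 + size (nbr_pairs e1 e2 pw.1) * (TE + 2) | pw <- l])%N.
Proof.
elim: l => //= pw l IH; rewrite /outer -/(outer cr).
apply: leq_trans (inner_c _ _ _ _ _) _; lia.
Qed.


Lemma mem_all_pairs p : p \in all_pairs V1 V2.
Proof. by case: p => a b; apply: allpairs_f; rewrite mem_enum. Qed.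

Lemma uniq_all_pairs : uniq (all_pairs V1 V2).
Proof. by apply: allpairs_uniq; rewrite ?enum_uniq // => [[a b] [c d]] _ _. Qed.

Lemma mapfst_VS : map fst VS = [seq p <- all_pairs V1 V2 | 0 < kV p.1 p.2].
Proof. rewrite /VS; elim: (all_pairs V1 V2) => //= p s IH; case: ifP => _ //=; by rewrite IH. Qed.

Lemma uniq_VS : uniq (map fst VS).
Proof. by rewrite mapfst_VS filter_uniq // uniq_all_pairs. Qed.

Lemma mem_VS_fst y : (y \in map fst VS) = wdp_vertex kV y.
Proof. by rewrite mapfst_VS mem_filter mem_all_pairs andbT. Qed.

Lemma mem_VS p w : ((p, w) \in VS) = wdp_vertex kV p && (w == wdp_vweight kV p).
Proof.
apply/mapP/andP => [[q]|[hp /eqP hw]].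
  by rewrite mem_filter => /andP[hq _] [-> ->].
exists p; last by rewrite hw.
by rewrite mem_filter -[0 < _]/(wdp_vertex kV p) hp mem_all_pairs.
Qed.

Lemma mem_nbr x y : (y \in nbr_pairs e1 e2 x) = e1 x.1 y.1 && e2 x.2 y.2.
Proof.
apply/allpairsP/andP => [[[a b] [ha hb ->]]|[ha hb]].
  by rewrite !mem_enum in ha hb.
by exists y; case: y ha hb => a b ha hb; rewrite !mem_enum.
Qed.

Lemma uniq_nbr x : uniq (nbr_pairs e1 e2 x).
Proof. by apply: allpairs_uniq; rewrite ?enum_uniq // => [[a b] [c d]] _ _. Qed.

Lemma mem_outer cr (l : seq ((V1 * V2) * R)) x y w : ((x, y, w) \in flatten [seq F cr pw.1 | pw <- l]) =
  (x \in map fst l) && [&& y \in nbr_pairs e1 e2 x, cr y, prec x y,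
      0 < kE x.1 y.1 x.2 y.2 & w == kE x.1 y.1 x.2 y.2].
Proof.
apply/flattenP/andP.
  case=> s /mapP [pw pwl ->] /mapP [y']; rewrite mem_filter.
  move=> /andP [/andP[/andP [cy pxy] kpos] ynb] [ex ey ew]; subst.
  split; first by apply/mapP; exists pw.
  by rewrite ynb cy pxy kpos eqxx.
case=> /mapP [pw pwl ex] /and5P[ynb cy pxy kpos /eqP ew]; subst.
exists (F cr pw.1); first by apply: map_f.
by apply/mapP; exists y; rewrite ?mem_filter ?ynb ?cy ?pxy ?kpos.
Qed.

Lemma uniq_outer cr (l : seq ((V1 * V2) * R)) : uniq (map fst l) -> uniq (flatten [seq F cr pw.1 | pw <- l]).
Proof.
elim: l => //= a l IH /andP [na ul].
rewrite cat_uniq IH // andbT; apply/andP; split.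
  rewrite map_inj_uniq ?filter_uniq ?uniq_nbr //.
  by move=> y1 y2 [].
apply/hasP => [[[[x y] w] zin zF]].
have : (x, y, w) \in flatten [seq F cr pw.1 | pw <- [:: a]] by rewrite /= cats0.
rewrite mem_outer /= inE => /andP [/eqP xa _].
move: zin; rewrite mem_outer => /andP [xl _].
by move: na; rewrite -xa xl.
Qed.

End Aux.

Lemma set2_eq (T : finType) (a b c d : T) : [set a; b] = [set c; d] ->
  (a = c /\ b = d) \/ (a = d /\ b = c).
Proof.
move=> E.
have ha : a \in [set c; d] by rewrite -E set21.
have hb : b \in [set c; d] by rewrite -E set22.
have hc : c \in [set a; b] by rewrite E set21.
have hd : d \in [set a; b] by rewrite E set22.
case/set2P: ha => ?; case/set2P: hb => ?; case/set2P: hc => ?; case/set2P: hd => ?;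
  subst; by [left; split | right; split].
Qed.
Local Close Scope ring_scope.

Lemma half_inj (V : finType) (e : rel V) (lt : rel V)
  (asym : forall a b, lt a b -> lt b a -> False) :
  (#|[set p : V * V | e p.1 p.2 && lt p.1 p.2]| <= #|edge_set e|)%N.
Proof.
rewrite -(card_in_imset (f := fun p : V * V => [set p.1; p.2])).
  apply: subset_leq_card; apply/subsetP => A /imsetP [p hp ->].
  move: hp; rewrite inE => /andP [he _].
  rewrite inE; apply/existsP; exists p.1; apply/existsP; exists p.2.
  by rewrite he eqxx.
move=> [a b] [c d]; rewrite !inE /= => /andP[_ hab] /andP[_ hcd].
move=> /set2_eq [[-> ->]|[ad bc]] //; subst.
by case: (asym _ _ hab hcd).
Qed.

Lemma deg_sum (V : finType) (e : rel V) :
  (\sum_u #|e u| = #|[set p : V * V | e p.1 p.2]|)%N.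
Proof.
transitivity (\sum_u \sum_v (if e u v then 1 else 0))%N.
  by apply: eq_bigr => u _; rewrite -sum1_card big_mkcond.
by rewrite pair_big /= -sum1dep_card [RHS]big_mkcond.
Qed.

Lemma handshake (V : finType) (e : rel V) : irreflexive e ->
  (\sum_u #|e u| <= 2 * #|edge_set e|)%N.
Proof.
move=> irr; rewrite deg_sum.
set D1 := [set p : V * V | e p.1 p.2 && (enum_rank p.1 < enum_rank p.2)%N].
set D2 := [set p : V * V | e p.1 p.2 && (enum_rank p.2 < enum_rank p.1)%N].
have h1 : (#|D1| <= #|edge_set e|)%N.
  by apply: (@half_inj V e (fun a b => enum_rank a < enum_rank b)%N) => a b h h'; have := ltn_trans h h'; rewrite ltnn.
have h2 : (#|D2| <= #|edge_set e|)%N.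
  by apply: (@half_inj V e (fun a b => enum_rank b < enum_rank a)%N) => a b h h'; have := ltn_trans h h'; rewrite ltnn.
have hs : [set p : V * V | e p.1 p.2] \subset D1 :|: D2.
  apply/subsetP => p; rewrite !inE => he; rewrite he /=.
  case: (ltngtP (enum_rank p.1) (enum_rank p.2)) => // /val_inj /enum_rank_inj eq.
  by move: he; rewrite eq irr.
apply: leq_trans (subset_leq_card hs) _.
have := cardsUI D1 D2; lia.
Qed.

Lemma sum_VS (R : numDomainType) (V1 V2 : finType) (kV : V1 -> V2 -> R) (f : V1 * V2 -> nat) :
  (sumn [seq f pw.1 | pw <- VS kV] <= sumn [seq f p | p <- all_pairs V1 V2])%N.
Proof.
rewrite /VS; elim: (all_pairs V1 V2) => //= p s IH; case: ifP => _ /=; lia.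
Qed.

Lemma sum_nbr (V1 V2 : finType) (e1 : rel V1) (e2 : rel V2) :
  sumn [seq size (nbr_pairs e1 e2 p) | p <- all_pairs V1 V2] =
  ((\sum_u #|e1 u|) * (\sum_s #|e2 s|))%N.
Proof.
rewrite sumnE big_map /all_pairs big_allpairs -[in RHS](big_enum _ _ predT) /=.
rewrite -[in RHS](big_enum _ _ predT) /=.
rewrite big_distrl; apply: eq_bigr => u _; rewrite big_distrr; apply: eq_bigr => s _.
by rewrite /nbr_pairs size_allpairs -!cardE.
Qed.
Local Open Scope ring_scope.

Lemma sumn_aff (T : Type) (g : T -> nat) (k : nat) (s : seq T) :
  sumn [seq (1 + g p * k)%N | p <- s] = (size s + sumn [seq g p | p <- s] * k)%N.
Proof. elim: s => //= p s ->; nia. Qed.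

Theorem proposition8 :
  exists C : nat,
  forall (R : numDomainType) (V1 V2 : finType) (e1 : rel V1) (e2 : rel V2),
    symmetric e1 -> irreflexive e1 -> symmetric e2 -> irreflexive e2 ->
  forall (kV : V1 -> V2 -> R) (kE : V1 -> V1 -> V2 -> V2 -> R),
    (forall u v s t, kE u v s t = kE v u s t) ->
    (forall u v s t, kE u v s t = kE u v t s) ->
  forall (TV TE : nat), (1 <= TV)%N -> (1 <= TE)%N ->
  forall prec : rel (V1 * V2),
    irreflexive prec -> transitive prec ->
    (forall x y, x != y -> prec x y || prec y x) ->
  let '(vs, es, cost) := wdp_algorithm e1 e2 kV kE TV TE prec in
  computes_wdp e1 e2 kV kE vs es /\
  (cost <= C * (#|V1| * #|V2| * TV
               + #|edge_set e1| * #|edge_set e2| * TE))%N.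
Proof.
exists 12%N => R V1 V2 e1 e2 s1 i1 s2 i2 kV kE hk1 hk2 TV TE hTV hTE prec pirr ptr ptot.
rewrite /wdp_algorithm phase1E phase2E.
set cr := (fun y => y \in map fst (VS kV)).
have Hl := outer_l e1 e2 kE TE prec cr (VS kV).
have Hc := outer_c e1 e2 kE TE prec cr (VS kV).
case E: (foldr (outer e1 e2 kE TE prec cr) _ _) Hl Hc => [es c2] /= Hl Hc.
have crE y : cr y = wdp_vertex kV y by rewrite /cr mem_VS_fst.
have memE x y w : ((x, y, w) \in es) = [&& wdp_vertex kV x, e1 x.1 y.1, e2 x.2 y.2,
   wdp_vertex kV y, prec x y, 0 < kE x.1 y.1 x.2 y.2 & w == kE x.1 y.1 x.2 y.2].
  by rewrite Hl mem_outer mem_VS_fst mem_nbr crE -!andbA.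
split.
  split.
  - exact: uniq_VS.
  - exact: mem_VS.
  - rewrite map_inj_in_uniq; first by rewrite Hl uniq_outer // uniq_VS.
    move=> [[x y] w] [[x' y'] w']; rewrite !memE.
    move=> /and5P[_ _ _ _ /and3P[pxy _ /eqP ->]] /and5P[_ _ _ _ /and3P[pxy' _ /eqP ->]] /=.
    move=> /set2_eq [[-> ->]|[ex ey]] //; subst.
    by have := ptr _ _ _ pxy pxy'; rewrite pirr.
  - by move=> x y w; rewrite memE => /and5P[_ _ _ _ /and3P[_ _ /eqP ->]].
  - move=> x y; split.
      rewrite /wdp_edge => /and5P[vx vy h1 h2 hk].
      have nxy : x != y.
        by apply/eqP => exy; move: h1; rewrite exy i1.
      case/orP: (ptot _ _ nxy) => pxy.
        by exists (kE x.1 y.1 x.2 y.2); left; rewrite memE vx vy h1 h2 pxy hk eqxx.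
      exists (kE y.1 x.1 y.2 x.2); right.
      by rewrite memE vx vy (s1 y.1) (s2 y.2) h1 h2 pxy hk1 hk2 hk eqxx.
    case=> w [] ; rewrite memE => /and5P[vx h1 h2 vy /and3P[pxy hk _]];
      rewrite /wdp_edge ?vx ?vy ?h1 ?h2 //=.
    by rewrite (s1 x.1) (s2 x.2) h1 h2 hk1 hk2.
have hs1 := handshake i1; have hs2 := handshake i2.
have := leq_trans Hc (sum_VS kV (fun p => 1 + size (nbr_pairs e1 e2 p) * (TE + 2))%N).
rewrite sumn_aff sum_nbr /all_pairs size_allpairs -!cardE.
set n := #|V1|; set n' := #|V2|; set S1 := (\sum_u _)%N; set S2 := (\sum_u _)%N.
set m := #|edge_set e1|; set m' := #|edge_set e2|.
have hP : (S1 * S2 <= 4 * (m * m'))%N.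
  have := leq_mul hs1 hs2; lia.
move: hP; set P := (S1 * S2)%N; set M := (m * m')%N; set N := (n * n')%N.
move=> hP hc2.
have : (P * (TE + 2) <= 4 * M * (TE + 2))%N by apply: leq_mul.
nia.
Qed.
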